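(* Let $X=(X_1,\dots,X_T)$ be a random vector of nonnegative integer-valued random variables with finite second moments and $\mathrm{Var}(X_t)>0$ for all $t$. For $p\in(0,1]$, let $Y^{(p)}=(Y_1,\dots,Y_T)$ be defined by: conditionally on $X$, the $Y_t$ are independent with $Y_t\sim B(X_t,p)$ (Binomial with $X_t$ trials and success probability $p$). Then for all $i,j$, the magnitude $|\rho_{Y_i,Y_j}|$ of the Pearson correlation between $Y_i$ and $Y_j$ is a monotonically non-decreasing function of $p$ on $(0,1]$.
   Context: $X$ is the ground truth time series of event counts and $Y$ the observed signal in which each event is observed independently with probability $p$ (the sampling rate). The Pearson correlation is $\rho_{Y_i,Y_j}=\mathrm{Cov}(Y_i,Y_j)/(\sigma_{Y_i}\sigma_{Y_j})$. *)

(* Defs.v *)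
From HB Require Import structures.
From mathcomp Require Import all_boot all_order all_algebra.
From mathcomp Require Import all_classical all_reals all_analysis.
Set Implicit Arguments. Unset Strict Implicit. Unset Printing Implicit Defensive.
Import Order.TTheory GRing.Theory Num.Theory.
Local Open Scope classical_set_scope.
Local Open Scope ring_scope.

Definition correlation d (Om : measurableType d) (R : realType)
  (P : probability Om R) (X Y : Om -> R) : R :=
  fine (covariance P X Y) / Num.sqrt (fine ('V_P[X]) * fine ('V_P[Y])).

(* Y is obtained from X by binomial thinning with rate p: conditionally on
   X = x, the Y_t are independent with Y_t ~ B(x_t, p). *)
Definition binomial_thinning d (Om : measurableType d) (R : realType)
  (P : probability Om R) (T : nat) (X Y : 'I_T -> Om -> R) (p : R) : Prop :=
  forall x y : 'I_T -> nat,
    P [set w | forall t, X t w = (x t)%:R /\ Y t w = (y t)%:R] =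
    (P [set w | forall t, X t w = (x t)%:R] *
     (\prod_(t < T) binomial_pmf (x t) p (y t))%:E)%E.

(* Main.v *)
Require Import Defs.
From HB Require Import structures.
From mathcomp Require Import all_boot all_order all_algebra.
From mathcomp Require Import all_classical all_reals all_analysis.
From mathcomp Require Import measurable_realfun.
From mathcomp Require Import ring lra.
Import Order.TTheory GRing.Theory Num.Theory.

Module Helpers.
Set Implicit Arguments. Unset Strict Implicit. Unset Printing Implicit Defensive.
Import Order.TTheory GRing.Theory Num.Theory.
Local Open Scope ring_scope.

Section binmom.
Context {R : realType} (p : R).

Definition mom (k n : nat) : R := \sum_(j < n.+1) (j%:R)^+k * binomial_pmf n p j.

Lemma pmf_shift (m j : nat) :
  (j.+1)%:R * binomial_pmf m.+1 p j.+1 = p * (m.+1)%:R * binomial_pmf m p j.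
Proof.
rewrite /binomial_pmf subSS /unstable.onem.
have H : (m.+1 * 'C(m, j))%:R = (j.+1 * 'C(m.+1, j.+1))%:R :> R by rewrite (mul_bin_diag m.+1 j).
rewrite !natrM in H.
rewrite -[_ *+ 'C(m.+1, _)]mulr_natr -[_ *+ 'C(m, _)]mulr_natr.
rewrite exprS.
transitivity (p * (p ^+ j * (1 - p) ^+ (m - j)) * ((j.+1)%:R * 'C(m.+1, j.+1)%:R)); first by ring.
rewrite -H. ring.
Qed.

Lemma mom0 n : mom 0 n = 1.
Proof.
rewrite /mom.
under eq_bigr do rewrite expr0 mul1r /binomial_pmf mulrC.
rewrite -(exprDn_comm); last exact: mulrC.
by rewrite /unstable.onem subrK expr1n.
Qed.

Lemma mom_rec k m : mom k.+1 m.+1 = p * (m.+1)%:R * \sum_(j < m.+1) (j.+1%:R)^+k * binomial_pmf m p j.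
Proof.
rewrite /mom big_ord_recl (_ : (nat_of_ord (@ord0 m.+1))%:R = 0 :> R) // expr0n mul0r add0r mulr_sumr.
apply: eq_bigr => j _; rewrite lift0 exprS mulrAC pmf_shift; ring.
Qed.

Lemma mom1 n : mom 1 n = n%:R * p.
Proof.
case: n => [|m].
  by rewrite /mom big_ord1 (_ : (nat_of_ord (@ord0 0))%:R = 0 :> R) // expr1 !mul0r.
rewrite mom_rec (_ : \sum_(j < m.+1) _ = 1); first by rewrite mulr1 mulrC.
rewrite -(mom0 m); apply: eq_bigr => j _; by rewrite !expr0.
Qed.

Lemma mom2 n : mom 2 n = n%:R * p * (1 - p) + (n%:R * p) ^+ 2.
Proof.
case: n => [|m].
  by rewrite /mom big_ord1 (_ : (nat_of_ord (@ord0 0))%:R = 0 :> R) // expr0n !mul0r add0r expr0n.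
rewrite mom_rec.
have -> : \sum_(j < m.+1) (j.+1%:R)^+1 * binomial_pmf m p j = mom 1 m + mom 0 m.
  rewrite /mom -big_split; apply: eq_bigr => j _ /=; rewrite expr1 expr0 -addn1 natrD; ring.
rewrite mom1 mom0 -addn1 natrD; ring.
Qed.

Lemma pmf_small n j : (n < j)%N -> binomial_pmf n p j = 0.
Proof. by move=> h; rewrite /binomial_pmf bin_small. Qed.

Lemma mom_widen n M (F : nat -> R) : (n < M)%N ->
  \sum_(j < M) F j * binomial_pmf n p j = \sum_(j < n.+1) F j * binomial_pmf n p j.
Proof.
move=> nM.
rewrite (big_ord_widen M (fun j => F j * binomial_pmf n p j) nM).
rewrite [RHS]big_mkcond /=; apply: eq_bigr => j _.
by case: ifPn => //; rewrite -leqNgt => h; rewrite pmf_small ?mulr0.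
Qed.

End binmom.

Local Open Scope classical_set_scope.
Local Open Scope ring_scope.

Lemma bigsetI_forall (Om : Type) (I : eqType) (F : I -> set Om) (s : seq I) (w : Om) :
  (\big[setI/setT]_(i <- s) F i) w <-> (forall i, i \in s -> F i w).
Proof.
elim: s => [|a s IH]; first by rewrite big_nil; split.
rewrite big_cons; split.
  case=> Fa /IH h i; rewrite inE => /orP[/eqP ->|]; [exact: Fa| exact: h].
by move=> h; split; [apply: h; rewrite mem_head | apply/IH => i hi; apply: h; rewrite inE hi orbT].
Qed.

Lemma meas_forall d (Om : measurableType d) (I : finType) (F : I -> set Om) :
  (forall i, measurable (F i)) -> measurable [set w | forall i, F i w].
Proof.
move=> mF.
have -> : [set w | forall i, F i w] = \big[setI/setT]_(i <- enum I) F i.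
  apply/seteqP; split => w /=.
    by move=> h; apply/bigsetI_forall => i _; exact: h.
  move/bigsetI_forall => h i; apply: h.
  by rewrite mem_enum.
exact: bigsetI_measurable.
Qed.

Lemma bigsetU_exists (Om : Type) (I : eqType) (F : I -> set Om) (s : seq I) (w : Om) :
  (\big[setU/set0]_(i <- s) F i) w -> exists2 i, i \in s & F i w.
Proof.
elim: s => [|a s IH]; first by rewrite big_nil.
rewrite big_cons => -[Fa|/IH [i hi Fi]]; first by exists a; rewrite ?mem_head.
by exists i; rewrite // inE hi orbT.
Qed.

Lemma natr_eq (R : numDomainType) (m n : nat) : (m%:R : R) = n%:R -> m = n.
Proof. by move/eqP; rewrite eqr_nat => /eqP. Qed.

Section core.
Context d (Om : measurableType d) (R : realType) (P : probability Om R) (T : nat)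
  (X Y : 'I_T -> {RV P >-> R}) (p : R)
  (hXnat : forall t w, exists n : nat, X t w = n%:R)
  (hth : binomial_thinning P (fun t => (X t : Om -> R)) (fun t => (Y t : Om -> R)) p).

Local Notation S := {ffun 'I_T -> nat}.
Definition ax (x : S) : set Om := [set w | forall t, X t w = (x t)%:R].
Definition Mx (x : S) : nat := (\max_t x t).+1.
Local Notation B x := {ffun 'I_T -> 'I_(Mx x)}.
Definition bxy (x : S) (y : B x) : set Om :=
  [set w | forall t, X t w = (x t)%:R /\ Y t w = (y t : nat)%:R].
Definition Gx (x : S) : set Om := \big[setU/set0]_(y <- enum (B x)) bxy y.
Definition C (n : nat) : set Om := if @pickle_inv S n is Some x then Gx x else set0.
Definition G : set Om := \bigcup_n C n.
Definition prodpmf (x : S) (y : B x) : R := \prod_t binomial_pmf (x t) p (y t).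

Lemma m_ax x : measurable (ax x).
Proof.
exact: (meas_forall (F := fun t => X t @^-1` [set (x t)%:R])
  (fun t => measurable_funPTI (X t) (measurable_set1 _))).
Qed.

Lemma m_bxy x (y : B x) : measurable (bxy y).
Proof.
apply: (meas_forall (F := fun t => X t @^-1` [set (x t)%:R] `&` Y t @^-1` [set (y t : nat)%:R])).
move=> t; apply: measurableI; exact: (measurable_funPTI _ (measurable_set1 _)).
Qed.

Lemma m_Gx x : measurable (Gx x).
Proof. by apply: bigsetU_measurable => y _; exact: m_bxy. Qed.

Lemma m_C n : measurable (C n).
Proof. by rewrite /C; case: pickle_inv => [x|]; [exact: m_Gx|exact: measurable0]. Qed.

Lemma m_G : measurable G.
Proof. by apply: bigcupT_measurable => n; exact: m_C. Qed.

Lemma Gx_sub x : Gx x `<=` ax x.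
Proof. by move=> w; rewrite /Gx => /(@bigsetU_exists _ _ _ _ w) [y _ h] t; case: (h t). Qed.

Lemma ax_inj x x' w : ax x w -> ax x' w -> x = x'.
Proof.
move=> h h'; apply/ffunP => t; apply: (@natr_eq R).
by rewrite -h -h'.
Qed.

Lemma trivI_bxy x : trivIset [set` enum (B x)] (@bxy x).
Proof.
move=> y y' _ _ [w] [h h']; apply/ffunP => t; apply: val_inj => /=.
by apply: (@natr_eq R); case: (h t) => _ <-; case: (h' t) => _ <-.
Qed.

Lemma trivI_C : trivIset setT C.
Proof.
move=> n m _ _ [w []]; rewrite /C.
case En: pickle_inv => [x|] // h; case Em: pickle_inv => [x'|] // h'.
have exx := ax_inj (Gx_sub h) (Gx_sub h'); subst x'.
by rewrite -(@pickle_invK S n) -(@pickle_invK S m) En Em.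
Qed.

Lemma P_bxy x (y : B x) : P (bxy y) = (P (ax x) * (prodpmf y)%:E)%E.
Proof. exact: (hth x (fun t => (y t : nat))). Qed.

Lemma int_Gx x (h : Om -> \bar R) (c : B x -> R) :
  measurable_fun (Gx x) h -> (forall y, 0 <= c y) ->
  (forall y w, bxy y w -> h w = (c y)%:E) ->
  (\int[P]_(w in Gx x) h w = ((fine (P (ax x))) * \sum_(y : B x) c y * prodpmf y)%:E)%E.
Proof.
move=> mh c0 hc.
have -> : (\int[P]_(w in Gx x) h w = \sum_(y <- enum (B x)) \int[P]_(w in bxy y) h w)%E.
  apply: ge0_integral_bigsetU; [exact: m_bxy| exact: enum_uniq | exact: trivI_bxy | exact: mh |].
  move=> w /(@bigsetU_exists _ _ _ _ w) [y _ hy]; rewrite (hc _ _ hy) lee_fin; exact: c0.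
set r := fine (P (ax x)).
have hr : P (ax x) = r%:E by rewrite /r fineK // (fin_num_measure P _ (m_ax x)).
rewrite (eq_bigr (fun y => ((r * (c y * prodpmf y))%:E))); last first.
  move=> y _; rewrite (eq_integral (cst (c y)%:E)); last first.
    by move=> w; rewrite in_setE => hw; exact: hc.
  rewrite integral_cst; last exact: m_bxy.
  change ((c y)%:E * P (bxy y) = (r * (c y * prodpmf y))%:E)%E.
  by rewrite (P_bxy y) hr -!EFinM; congr EFin; ring.
rewrite mulr_sumr -sumEFin.
by rewrite big_enum.
Qed.

Lemma sum_prod x (phi : 'I_T -> nat -> R) :
  \sum_(y : B x) (\prod_t phi t (y t)) * prodpmf y =
  \prod_t \sum_(j < (x t).+1) phi t j * binomial_pmf (x t) p j.
Proof.
rewrite /prodpmf.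
have E : forall y : B x, (\prod_t phi t (y t)) * (\prod_t binomial_pmf (x t) p (y t)) = \prod_t (phi t (y t) * binomial_pmf (x t) p (y t)).
  by move=> y; rewrite big_split.
rewrite (eq_bigr _ (fun y _ => E y)).
transitivity (\prod_t \sum_(j < Mx x) phi t j * binomial_pmf (x t) p j); last first.
  apply: eq_bigr => t _; apply: mom_widen; rewrite ltnS; exact: (leq_bigmax t).
by rewrite bigA_distr_bigA.
Qed.

Lemma sum_pmf1 x : \sum_(y : B x) prodpmf y = 1.
Proof.
transitivity (\sum_(y : B x) (\prod_t (fun _ _ => 1 : R) t (y t)) * prodpmf y).
  by apply: eq_bigr => y _; rewrite big1 ?mul1r.
rewrite (sum_prod x (fun _ _ => 1)); apply: big1 => t _.
rewrite -[RHS](mom0 p (x t)) /mom; apply: eq_bigr => j _; by rewrite expr0.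
Qed.

Lemma P_Gx x : P (Gx x) = P (ax x).
Proof.
have h1 : (\int[P]_(w in Gx x) (cst 1%E) w = (fine (P (ax x)) * \sum_(y : B x) 1 * prodpmf y)%:E)%E.
  apply: int_Gx => //; exact: measurable_cst.
rewrite integral_cst in h1; last exact: m_Gx.
rewrite mul1e in h1.
rewrite (_ : \sum_(y : B x) 1 * prodpmf y = 1) in h1; last first.
  by rewrite -[RHS](sum_pmf1 x); apply: eq_bigr => y _; rewrite mul1r.
rewrite mulr1 fineK in h1; last exact: (fin_num_measure P _ (m_ax x)).
exact: h1.
Qed.

Lemma P_axGx x : P (ax x `\` Gx x) = 0.
Proof.
rewrite measureD; [|exact: m_ax|exact: m_Gx|].
  rewrite setIidr; last exact: Gx_sub.
  change (P (ax x) - P (Gx x) = 0)%E.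
  by rewrite P_Gx subee // (fin_num_measure P _ (m_ax x)).
by rewrite ltey_eq (fin_num_measure P _ (m_ax x)).
Qed.

Lemma cover w : exists x, ax x w.
Proof.
exists [ffun t => projT1 (cid (hXnat t w))] => t; rewrite ffunE.
exact: (projT2 (cid (hXnat t w))).
Qed.

Definition Dn (n : nat) : set Om :=
  if @pickle_inv S n is Some x then ax x `\` Gx x else set0.

Lemma P_nG : P (~` G) = 0.
Proof.
apply/negligibleP; first exact: (measurableC m_G).
apply: (@negligibleS _ _ _ P (\bigcup_n Dn n)).
  move=> w nG; have [x hx] := cover w.
  exists (pickle x) => //; rewrite /Dn pickleK_inv; split => // hG; apply: nG.
  by exists (pickle x) => //; rewrite /C pickleK_inv.
apply: negligible_bigcup => n; rewrite /Dn; case: pickle_inv => [x|].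
  apply/negligibleP; [apply: measurableD; [exact: m_ax|exact: m_Gx]|exact: P_axGx].
by apply/negligibleP; [exact: measurable0|exact: measure0].
Qed.

Lemma CL (h : Om -> \bar R) (c : forall x : S, B x -> R) :
  measurable_fun setT h -> (forall x y, 0 <= c x y) ->
  (forall x (y : B x) w, bxy y w -> h w = (c x y)%:E) ->
  (\int[P]_w h w = \sum_(n <oo) (if @pickle_inv S n is Some x then
     ((fine (P (ax x))) * \sum_(y : B x) c x y * prodpmf y)%:E else 0))%E.
Proof.
move=> mh c0 hc.
rewrite -(setUv G) integral_setU; last 4 first.
- exact: m_G.
- exact: (measurableC m_G).
- by rewrite setUv.
- by apply/disj_set2P; rewrite setICr.
rewrite (null_set_integral (measurableC m_G)); last 2 first.
- exact: (measurable_funS _ (@subsetT _ _) mh).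
- exact: P_nG.
rewrite adde0 /G ge0_integral_bigcup; last 4 first.
- exact: m_C.
- exact: (measurable_funS _ (@subsetT _ _) mh).
- move=> w [n _]; rewrite /C; case: pickle_inv => // x.
  move=> /(@bigsetU_exists _ _ _ _ w) [y _ hy]; rewrite (hc _ _ _ hy) lee_fin; exact: c0.
- exact: trivI_C.
apply: eq_eseriesr => n _; rewrite /C; case: pickle_inv => [x|].
  apply: int_Gx => //; first exact: (measurable_funS _ (@subsetT _ _) mh).
  by move=> y w hw; exact: hc.
exact: integral_set0.
Qed.

Lemma ML (f1 f2 : Om -> R) (c1 c2 : forall x : S, B x -> R) :
  measurable_fun setT f1 -> measurable_fun setT f2 ->
  (forall x y, 0 <= c1 x y) -> (forall x y, 0 <= c2 x y) ->
  (forall x (y : B x) w, bxy y w -> f1 w = c1 x y) ->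
  (forall x (y : B x) w, bxy y w -> f2 w = c2 x y) ->
  (forall x, \sum_(y : B x) c1 x y * prodpmf y = \sum_(y : B x) c2 x y * prodpmf y) ->
  ('E_P[f1] = 'E_P[f2])%E.
Proof.
move=> m1 m2 p1 p2 h1 h2 hs; rewrite unlock.
rewrite (@CL (EFin \o f1) c1) //; last 2 first.
- exact/measurable_EFinP.
- by move=> x y w hw /=; rewrite (h1 _ _ _ hw).
rewrite (@CL (EFin \o f2) c2) //; last 2 first.
- exact/measurable_EFinP.
- by move=> x y w hw /=; rewrite (h2 _ _ _ hw).
apply: eq_eseriesr => n _; case: pickle_inv => // x.
by rewrite hs.
Qed.

Lemma EYe (e : 'I_T -> nat) (f1 f2 : Om -> R) (g : S -> R) :
  measurable_fun setT f1 -> measurable_fun setT f2 ->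
  (forall x (y : B x) w, bxy y w -> f1 w = \prod_t ((y t : nat)%:R) ^+ (e t)) ->
  (forall x w, ax x w -> f2 w = g x) -> (forall x, 0 <= g x) ->
  (forall x, g x = \prod_t mom p (e t) (x t)) ->
  ('E_P[f1] = 'E_P[f2])%E.
Proof.
move=> m1 m2 h1 h2 g0 hg.
apply: (@ML f1 f2 (fun x y => \prod_t ((y t : nat)%:R) ^+ (e t)) (fun x _ => g x)) => //.
- by move=> x y; apply: prodr_ge0 => t _; apply: exprn_ge0; exact: ler0n.
- by move=> x y w hw; apply: h2 => t; case: (hw t).
- move=> x; rewrite (sum_prod x (fun t j => (j%:R) ^+ (e t))) -mulr_sumr sum_pmf1 mulr1 hg.
  by [].
Qed.

End core.

Lemma prod_e1 (R : comRingType) (T : nat) (G : 'I_T -> nat -> R) i :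
  (forall t, G t 0%N = 1) -> \prod_t G t (t == i : nat) = G i 1%N.
Proof.
move=> G0; rewrite (bigD1 i) //= eqxx big1 ?mulr1 // => t /negbTE ->; exact: G0.
Qed.

Lemma prod_e2 (R : comRingType) (T : nat) (G : 'I_T -> nat -> R) i j :
  (forall t, G t 0%N = 1) ->
  \prod_t G t ((t == i) + (t == j))%N = if i == j then G i 2%N else G i 1%N * G j 1%N.
Proof.
move=> G0; case: eqP => [<-|/eqP nij].
  rewrite (bigD1 i) //= eqxx big1 ?mulr1 // => t /negbTE ->; exact: G0.
rewrite (bigD1 i) //= eqxx (negbTE nij) (bigD1 j) /=; last by rewrite eq_sym.
rewrite eqxx eq_sym (negbTE nij) big1 ?mulr1 // => t /andP[/negbTE -> /negbTE ->]; exact: G0.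
Qed.

Local Open Scope classical_set_scope.
Local Open Scope ring_scope.
Section s.
Context d (Om : measurableType d) (R : realType) (P : probability Om R).
Lemma L2crit (f : Om -> R) : measurable_fun setT f ->
  ('E_P[f ^+ 2] < +oo)%E -> f \in Lfun P 2%:E.
Proof.
move=> mf hf; rewrite inE; apply/andP; split; first by rewrite inE.
rewrite inE /= /finite_norm unlock /Lnorm.
apply: poweR_lty.
move: hf; rewrite unlock => hf.
apply: le_lt_trans hf; rewrite le_eqVlt; apply/orP; left; apply/eqP.
apply: eq_integral => w _ /=.
rewrite powR_mulrn ?normr_ge0 // real_normK //; exact: num_real.
Qed.
End s.

Section apps.
Context d (Om : measurableType d) (R : realType) (P : probability Om R) (T : nat)
  (X Y : 'I_T -> {RV P >-> R}) (p : R)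
  (hXnat : forall t w, exists n : nat, X t w = n%:R)
  (hth : binomial_thinning P (fun t => (X t : Om -> R)) (fun t => (Y t : Om -> R)) p)
  (hp : 0 < p <= 1)
  (hX2 : forall t, (X t : Om -> R) \in Lfun P 2%:E).

Let Pfin : P setT \is a fin_num := fin_num_measure P _ measurableT.
Let X1 t : (X t : Om -> R) \in Lfun P 1 := Lfun_subset12 Pfin (hX2 t).
Let p0 : 0 <= p. Proof. by case/andP: hp => /ltW. Qed.
Let p1 : 0 <= 1 - p. Proof. by case/andP: hp => _; rewrite subr_ge0. Qed.

Lemma EY1 i : ('E_P[Y i] = 'E_P[p \o* (X i : Om -> R)])%E.
Proof.
apply: (@EYe _ _ _ _ _ X Y p hXnat hth (fun t => (t == i : nat)) _ _ (fun x => p * (x i)%:R)).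
- exact: measurable_funPT.
- exact: (measurable_funM (measurable_funPT (X i)) (measurable_cst p)).
- move=> x y w hw; rewrite (prod_e1 (G := fun t k => ((y t : nat)%:R)^+k)) //.
  by case: (hw i) => _ ->; rewrite expr1.
- by move=> x w hw; rewrite /= (hw i) mulrC.
- by move=> x; apply: mulr_ge0 => //; exact: ler0n.
- move=> x; rewrite (prod_e1 (G := fun t k => mom p k (x t))); last by move=> t; exact: mom0.
  by rewrite mom1 mulrC.
Qed.

Lemma EYY i j : i != j ->
  ('E_P[((Y i : Om -> R) * (Y j : Om -> R))%R] =
   'E_P[((p ^+ 2) \o* ((X i : Om -> R) * (X j : Om -> R)))%R])%E.
Proof.
move=> nij.
apply: (@EYe _ _ _ _ _ X Y p hXnat hth (fun t => ((t == i) + (t == j))%N) _ _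
  (fun x => (x i)%:R * (x j)%:R * p ^+ 2)).
- exact: (measurable_funM (measurable_funPT (Y i)) (measurable_funPT (Y j))).
- exact: (measurable_funM (measurable_funM (measurable_funPT (X i)) (measurable_funPT (X j))) (measurable_cst _)).
- move=> x y w hw; rewrite (prod_e2 (G := fun t k => ((y t : nat)%:R)^+k)) //.
  rewrite (negbTE nij) !expr1.
  by case: (hw i) => _ <-; case: (hw j) => _ <-.
- by move=> x w hw /=; change (X i w * X j w * p ^+ 2 = (x i)%:R * (x j)%:R * p ^+ 2); rewrite (hw i) (hw j).
- by move=> x; apply: mulr_ge0; [apply: mulr_ge0; exact: ler0n | exact: exprn_ge0].
- move=> x; rewrite (prod_e2 (G := fun t k => mom p k (x t))); last by move=> t; exact: mom0.
  by rewrite (negbTE nij) !mom1; ring.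
Qed.

Definition f2 i : Om -> R :=
  ((p * (1 - p)) \o* (X i : Om -> R) \+ (p ^+ 2) \o* ((X i : Om -> R) ^+ 2))%R.

Lemma EY2 i : ('E_P[((Y i : Om -> R) ^+ 2)%R] = 'E_P[f2 i])%E.
Proof.
apply: (@EYe _ _ _ _ _ X Y p hXnat hth (fun t => ((t == i) + (t == i))%N) _ _
  (fun x => (x i)%:R * p * (1 - p) + ((x i)%:R * p) ^+ 2)).
- exact: (measurable_funM (measurable_funPT (Y i)) (measurable_funPT (Y i))).
- apply: measurable_funD.
    exact: (measurable_funM (measurable_funPT (X i)) (measurable_cst _)).
  exact: (measurable_funM (measurable_funM (measurable_funPT (X i)) (measurable_funPT (X i))) (measurable_cst _)).
- move=> x y w hw; rewrite (prod_e2 (G := fun t k => ((y t : nat)%:R)^+k)) //.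
  rewrite eqxx.
  by case: (hw i) => _ <-.
- move=> x w hw; rewrite /f2 /=; change (X i w * (p * (1 - p)) + (X i w * X i w) * p ^+ 2 = (x i)%:R * p * (1 - p) + ((x i)%:R * p) ^+ 2); rewrite (hw i); ring.
- move=> x; apply: addr_ge0; last exact: sqr_ge0.
  by apply: mulr_ge0 => //; apply: mulr_ge0 => //; exact: ler0n.
- move=> x; rewrite (prod_e2 (G := fun t k => mom p k (x t))); last by move=> t; exact: mom0.
  by rewrite eqxx mom2.
Qed.

Let XX1 i j : ((X i : Om -> R) * (X j : Om -> R))%R \in Lfun P 1 :=
  Lfun2_mul_Lfun1 (hX2 i) (hX2 j).

Lemma f2_L1 i : f2 i \in Lfun P 1.
Proof.
rewrite /f2; apply: rpredD; [apply: Lfun_scale => //; exact: X1 | apply: Lfun_scale => //; exact: XX1].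
Qed.

Lemma Y2 i : (Y i : Om -> R) \in Lfun P 2%:E.
Proof.
apply: L2crit; first exact: measurable_funPT.
rewrite EY2; have := expectation_fin_num (f2_L1 i).
by rewrite fin_numE => /andP[_ h]; rewrite ltey.
Qed.

Lemma Y1 i : (Y i : Om -> R) \in Lfun P 1.
Proof. exact: (Lfun_subset12 Pfin (Y2 i)). Qed.

Lemma EY1' i : ('E_P[Y i] = (p * fine 'E_P[X i])%:E)%E.
Proof.
rewrite EY1 expectationZl; last exact: X1.
by rewrite EFinM fineK // expectation_fin_num.
Qed.

Lemma EYY' i j : i != j ->
  ('E_P[((Y i : Om -> R) * (Y j : Om -> R))%R] =
   (p ^+ 2 * fine 'E_P[((X i : Om -> R) * (X j : Om -> R))%R])%:E)%E.
Proof.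
move=> nij; rewrite EYY // expectationZl; last exact: XX1.
by rewrite [RHS]EFinM fineK // expectation_fin_num.
Qed.

Lemma EY2' i : ('E_P[((Y i : Om -> R) ^+ 2)%R] =
  (p * (1 - p) * fine 'E_P[X i] + p ^+ 2 * fine 'E_P[((X i : Om -> R) ^+ 2)%R])%:E)%E.
Proof.
rewrite EY2 /f2 expectationD; last 2 first.
- by apply: Lfun_scale => //; exact: X1.
- by apply: Lfun_scale => //; exact: XX1.
rewrite expectationZl; last exact: X1.
rewrite expectationZl; last exact: XX1.
set a := 'E_P[_ ^+ 2]%E; set b := 'E_P[X i]%E.
have ha : a = (fine a)%:E by rewrite fineK // expectation_fin_num //; exact: XX1.
have hb : b = (fine b)%:E by rewrite fineK // expectation_fin_num //; exact: X1.
by rewrite [in LHS]ha [in LHS]hb -!EFinM -EFinD.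
Qed.

Lemma covY i j : i != j ->
  fine (covariance P (Y i) (Y j)) = p ^+ 2 * fine (covariance P (X i) (X j)).
Proof.
move=> nij.
rewrite covarianceE; [|exact: Y1|exact: Y1|exact: (Lfun2_mul_Lfun1 (Y2 i) (Y2 j))].
rewrite [covariance P (X i) _]covarianceE; [|exact: X1|exact: X1|exact: XX1].
rewrite EYY' // !EY1'.
set a := 'E_P[_ * _]%E; set b := 'E_P[X i]%E; set c := 'E_P[X j]%E.
have ha : a = (fine a)%:E by rewrite fineK // expectation_fin_num //; exact: XX1.
have hb : b = (fine b)%:E by rewrite fineK // expectation_fin_num //; exact: X1.
have hc : c = (fine c)%:E by rewrite fineK // expectation_fin_num //; exact: X1.
rewrite [in RHS]ha [in RHS]hb [in RHS]hc /=; ring.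
Qed.

Lemma varY i : fine ('V_P[Y i]) = p * (1 - p) * fine 'E_P[X i] + p ^+ 2 * fine 'V_P[X i].
Proof.
rewrite varianceE; last exact: Y2.
rewrite [variance P (X i)]varianceE; last exact: hX2.
rewrite EY2' EY1'.
set a := 'E_P[_ ^+ 2]%E; set b := 'E_P[X i]%E.
have ha : a = (fine a)%:E.
  rewrite fineK // expectation_fin_num //.
  have -> : (((X i : Om -> R) ^+ 2)%R) = ((X i : Om -> R) * (X i : Om -> R))%R by rewrite expr2.
  exact: XX1.
have hb : b = (fine b)%:E by rewrite fineK // expectation_fin_num //; exact: X1.
rewrite [in RHS]ha [in RHS]hb /=; ring.
Qed.

End apps.

Local Open Scope ring_scope.

Lemma key_ineq (R : rcfType) (p q c ai aj mi mj : R) :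
  0 < p -> p <= q -> q <= 1 -> 0 < ai -> 0 < aj -> 0 <= mi -> 0 <= mj ->
  `|p^+2 * c / Num.sqrt ((p*(1-p)* mi + p^+2*ai) * (p*(1-p)* mj + p^+2*aj))|
  <= `|q^+2 * c / Num.sqrt ((q*(1-q)* mi + q^+2*ai) * (q*(1-q)* mj + q^+2*aj))|.
Proof.
move=> p0 pq q1 ai0 aj0 mi0 mj0.
have q0 : 0 < q by apply: lt_le_trans pq.
have pos r a m : 0 < r -> r <= 1 -> 0 < a -> 0 <= m -> 0 < r*(1-r)* m + r^+2*a.
  move=> r0 r1 a0 m0; apply: ltr_wpDl; last by apply: mulr_gt0 => //; exact: exprn_gt0.
  by apply: mulr_ge0 => //; apply: mulr_ge0; [exact: ltW| rewrite subr_ge0].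
have p1 : p <= 1 by apply: le_trans q1.
set up := p*(1-p)* mi + p^+2*ai; set wp := p*(1-p)* mj + p^+2*aj.
set uq := q*(1-q)* mi + q^+2*ai; set wq := q*(1-q)* mj + q^+2*aj.
have up0 : 0 < up by apply: pos.
have wp0 : 0 < wp by apply: pos.
have uq0 : 0 < uq by apply: pos.
have wq0 : 0 < wq by apply: pos.
have k1 : p^+2 * uq <= q^+2 * up.
  rewrite -subr_ge0 (_ : q^+2 * up - p^+2 * uq = p*q* mi*(q-p)); last by rewrite /up /uq; ring.
  by apply: mulr_ge0; [apply: mulr_ge0 => //; apply: mulr_ge0; exact: ltW | rewrite subr_ge0].
have k2 : p^+2 * wq <= q^+2 * wp.
  rewrite -subr_ge0 (_ : q^+2 * wp - p^+2 * wq = p*q* mj*(q-p)); last by rewrite /wp /wq; ring.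
  by apply: mulr_ge0; [apply: mulr_ge0 => //; apply: mulr_ge0; exact: ltW | rewrite subr_ge0].
have k3 : (p^+2)^+2 * (uq * wq) <= (q^+2)^+2 * (up * wp).
  have := ler_pM _ _ k1 k2.
  rewrite (_ : p^+2 * uq * (p^+2 * wq) = (p^+2)^+2 * (uq * wq)); last by ring.
  rewrite (_ : q^+2 * up * (q^+2 * wp) = (q^+2)^+2 * (up * wp)); last by ring.
  have pp0 : 0 <= p^+2 by apply: exprn_ge0; exact: ltW.
  by apply; apply: mulr_ge0 => //; exact: ltW.
have k4 : p^+2 * Num.sqrt (uq * wq) <= q^+2 * Num.sqrt (up * wp).
  have := ler_wsqrtr k3.
  have pp0 : 0 <= p^+2 by apply: exprn_ge0; exact: ltW.
  have qq0 : 0 <= q^+2 by apply: exprn_ge0; exact: ltW.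
  have h1 : Num.sqrt ((p^+2)^+2) = p^+2 by rewrite sqrtr_sqr ger0_norm.
  have h2 : Num.sqrt ((q^+2)^+2) = q^+2 by rewrite sqrtr_sqr ger0_norm.
  have e1 : Num.sqrt ((p^+2)^+2 * (uq * wq)) = p^+2 * Num.sqrt (uq * wq).
    rewrite sqrtrM; first by congr (_ * _); exact: h1.
    by apply: exprn_ge0.
  have e2 : Num.sqrt ((q^+2)^+2 * (up * wp)) = q^+2 * Num.sqrt (up * wp).
    rewrite sqrtrM; first by congr (_ * _); exact: h2.
    by apply: exprn_ge0.
  by rewrite e1 e2.
set sp := Num.sqrt (up * wp); set sq := Num.sqrt (uq * wq).
have sp0 : 0 < sp by rewrite sqrtr_gt0 mulr_gt0.
have sq0 : 0 < sq by rewrite sqrtr_gt0 mulr_gt0.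
have pp0 : 0 <= p^+2 by apply: exprn_ge0; exact: ltW.
have qq0 : 0 <= q^+2 by apply: exprn_ge0; exact: ltW.
rewrite !normrM !normfV (gtr0_norm sp0) (gtr0_norm sq0) (gtr0_norm p0) (gtr0_norm q0).
have E1 : p * p * `|c| / sp = `|c| * (p^+2 / sp) by ring.
have E2 : q * q * `|c| / sq = `|c| * (q^+2 / sq) by ring.
rewrite E1 E2; apply: ler_wpM2l; first exact: normr_ge0.
rewrite ler_pdivrMr // mulrAC ler_pdivlMr //.
Qed.

End Helpers.
Import Helpers.
Unset Implicit Arguments.

Local Open Scope ring_scope.

Theorem corollary2 (d : measure_display) (Om : measurableType d) (R : realType)
  (P : probability Om R) (T : nat)
  (X : 'I_T -> {RV P >-> R})
  (hXnat : forall t w, exists n : nat, X t w = n%:R)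
  (hX2 : forall t, (X t : Om -> R) \in Lfun P 2%:E)
  (hXvar : forall t, (0 < 'V_P[X t])%E)
  (Y : R -> 'I_T -> {RV P >-> R})
  (hY : forall p, 0 < p <= 1 ->
     binomial_thinning P (fun t => (X t : Om -> R)) (fun t => (Y p t : Om -> R)) p) :
  forall p q : R, 0 < p -> p <= q -> q <= 1 ->
  forall i j : 'I_T,
    `| correlation P (Y p i) (Y p j) | <= `| correlation P (Y q i) (Y q j) |.
Proof.
move=> p q p0 pq q1 i j.
have hp : 0 < p <= 1 by rewrite p0 (le_trans pq q1).
have hq : 0 < q <= 1 by rewrite (lt_le_trans p0 pq) q1.
have m0 t : 0 <= fine 'E_P[X t].
  apply: fine_ge0; apply: expectation_ge0 => w; have [n ->] := hXnat t w; exact: ler0n.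
have a0 t : 0 < fine 'V_P[X t].
  apply: fine_gt0; rewrite hXvar /=; have := variance_fin_num (hX2 t).
  by rewrite fin_numE => /andP[_]; rewrite ltey.
have VY r t (hr : 0 < r <= 1) : fine 'V_P[Y r t] =
    r * (1 - r) * fine 'E_P[X t] + r ^+ 2 * fine 'V_P[X t].
  exact: (varY hXnat (hY r hr) hr hX2 t).
case: (eqVneq i j) => [<-|nij].
  have c1 r (hr : 0 < r <= 1) : correlation P (Y r i) (Y r i) = 1.
    rewrite /correlation (_ : covariance P (Y r i) (Y r i) = 'V_P[Y r i]) //.
    have v0 : 0 < fine 'V_P[Y r i].
      rewrite VY //; case/andP: hr => r0 r1.
      apply: ltr_wpDl; last by apply: mulr_gt0; [exact: exprn_gt0|exact: a0].
      by apply: mulr_ge0 => //; apply: mulr_ge0; [exact: ltW| rewrite subr_ge0].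
    by rewrite -expr2 sqrtr_sqr gtr0_norm // divff // gt_eqF.
  by rewrite !c1.
rewrite /correlation (covY hXnat (hY p hp) hp hX2 nij) (covY hXnat (hY q hq) hq hX2 nij).
rewrite !VY //.
apply: key_ineq => //; exact: a0.
Qed.
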